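(* Let $H$ be a connected edge-weighted graph with a $w$-gridtree $\mathcal{T}$. Let $\eta$ and $\eta'$ be columns such that $\eta$ is an ancestor of $\eta'$ in $\mathcal{T}$ and the path between them in $\mathcal{T}$ contains exactly $m$ columns strictly between $\eta$ and $\eta'$. Then every path $P$ in $H$ from a vertex $u\in\eta$ to a vertex $v\in V(H_{\eta'})$ has length at least $m\cdot w$.
   Context: A $w$-gridtree for a connected edge-weighted graph $H$ consists of a partition of $V(H)$ into disjoint subsets, each designated either a column or a leftover set, together with a rooted tree $\mathcal{T}$ whose nodes are in one-to-one correspondence with the columns and whose edges are in one-to-one correspondence with the leftover sets, satisfying: (Column adjacency) For every edge $(u,v)$ of $H$: either $u,v$ lie in the same subset, or $u,v$ lie in columns adjacent in $\mathcal{T}$, or one lies in a column $\eta$ and the other in a leftover set whose edge of $\mathcal{T}$ is incident to $\eta$. (Column width) For a column $\eta$, every other column and every edge of $\mathcal{T}$ is either below $\eta$ (in the subtree of $\mathcal{T}$ rooted at $\eta$; for edges, both endpoints in that subtree) or above $\eta$ (otherwise); a vertex is above/below $\eta$ if its column or leftover set is. If $a\in\eta$ is adjacent in $H$ to a vertex above $\eta$, $b$ is a vertex below $\eta$, and $P$ is a path in $H$ from $a$ to $b$, then $P$ has length at least $w$. (Column shortcut) For a column $\eta$, let $H_\eta$ be the subgraph of $H$ induced by $\eta$, all columns below $\eta$, and all leftover sets below $\eta$ or incident to $\eta$. There is a shortest path $\pi_\eta$ of $H_\eta$ such that every vertex of $\eta$ is within distance $2w$ of $\pi_\eta$ in the induced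 subgraph $H[\eta]$. *)

(* Defs.v *)
From mathcomp Require Import all_boot all_order all_algebra.
Set Implicit Arguments. Unset Strict Implicit. Unset Printing Implicit Defensive.
Import Order.TTheory GRing.Theory Num.Theory.
Local Open Scope ring_scope.

Section Graphs.
Variables (R : realFieldType) (V : finType).

Definition wgraph (adj : rel V) (wt : V -> V -> R) : Prop :=
  irreflexive adj /\ symmetric adj /\
  (forall x y, adj x y -> wt x y = wt y x) /\
  (forall x y, adj x y -> 0 <= wt x y).

Definition connected (adj : rel V) : Prop :=
  forall x y : V, exists p : seq V, path adj x p /\ last x p = y.

Definition is_path (adj : rel V) (x : V) (p : seq V) : bool :=
  path adj x p && uniq (x :: p).

Definition plen (wt : V -> V -> R) (x : V) (p : seq V) : R :=
  \sum_(e <- zip (x :: p) p) wt e.1 e.2.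

End Graphs.

Section Gridtree.
Variables (R : realFieldType) (V C : finType).

Definition rooted_tree (root : C) (par : C -> C) : Prop :=
  par root = root /\ forall c, exists k, iter k par c = root.

Definition desc (par : C -> C) (c d : C) : Prop :=
  exists k, iter k par c = d.

(* Location of a vertex: [inl c] = column c; [inr c] = leftover set of the
   tree edge {c, par c} (c non-root). *)
Definition loc_below (par : C -> C) (eta : C) (l : C + C) : Prop :=
  match l with
  | inl c => c <> eta /\ desc par c eta
  | inr c => c <> eta /\ desc par c eta
  end.

Definition loc_above (par : C -> C) (eta : C) (l : C + C) : Prop :=
  match l with
  | inl c => ~ desc par c eta
  | inr c => ~ (c <> eta /\ desc par c eta)
  end.

(* Location belongs to H_eta: eta, columns below eta, leftover sets below
   eta or incident to eta. *)
Definition loc_in_H (par : C -> C) (eta : C) (l : C + C) : Prop :=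
  match l with
  | inl c => desc par c eta
  | inr c => desc par c eta
  end.

Definition leftover_ok (root : C) (loc : V -> C + C) : Prop :=
  forall v c, loc v = inr c -> c <> root.

Definition column_adjacency (adj : rel V) (par : C -> C) (loc : V -> C + C) : Prop :=
  forall u v, adj u v ->
    loc u = loc v \/
    (exists c c', loc u = inl c /\ loc v = inl c' /\ c <> c' /\
                  (par c = c' \/ par c' = c)) \/
    (exists c e, ((loc u = inl c /\ loc v = inr e) \/ (loc u = inr e /\ loc v = inl c))
                 /\ (c = e \/ c = par e)).

Definition column_width (adj : rel V) (wt : V -> V -> R) (w : R)
    (par : C -> C) (loc : V -> C + C) : Prop :=
  forall (eta : C) (a b : V) (p : seq V),
    loc a = inl eta ->
    (exists x, adj a x /\ loc_above par eta (loc x)) ->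
    loc_below par eta (loc b) ->
    is_path adj a p -> last a p = b ->
    w <= plen wt a p.

Definition column_shortcut (adj : rel V) (wt : V -> V -> R) (w : R)
    (par : C -> C) (loc : V -> C + C) : Prop :=
  forall eta : C,
    exists (s : V) (pi : seq V),
      [/\ is_path adj s pi,
          (forall x, x \in s :: pi -> loc_in_H par eta (loc x)),
          (forall q : seq V, is_path adj s q -> last s q = last s pi ->
             (forall x, x \in s :: q -> loc_in_H par eta (loc x)) ->
             plen wt s pi <= plen wt s q) &
          (forall x, loc x = inl eta ->
             exists (y : V) (t : seq V),
               [/\ y \in s :: pi, is_path adj x t, last x t = y,
                   (forall z, z \in x :: t -> loc z = inl eta) &
                   plen wt x t <= 2 * w])].

Definition gridtree (adj : rel V) (wt : V -> V -> R) (w : R)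
    (root : C) (par : C -> C) (loc : V -> C + C) : Prop :=
  [/\ rooted_tree root par, leftover_ok root loc, column_adjacency adj par loc,
      column_width adj wt w par loc & column_shortcut adj wt w par loc].

Definition anc_gap (par : C -> C) (eta eta' : C) (m : nat) : Prop :=
  (eta' = eta /\ m = 0%N) \/
  (iter m.+1 par eta' = eta /\ forall j, (j <= m)%N -> iter j par eta' <> eta).

End Gridtree.

(* Main.v *)
Require Import Defs.
From mathcomp Require Import all_boot all_order all_algebra.
From mathcomp Require Import zify.
From Stdlib Require Import Classical.
Import Order.TTheory GRing.Theory Num.Theory.
Local Open Scope ring_scope.

Lemma split_trans (T : Type) (P : T -> Prop) (x : T) (p : seq T) :
  P x -> ~ P (last x p) ->
  exists p1 z p2, p = p1 ++ z :: p2 /\ P (last x p1) /\ ~ P z.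
Proof.
elim: p x => [|y p IH] x Px nPl /=; first by [].
case: (classic (P y)) => Py.
- have [p1 [z [p2 [-> [H1 H2]]]]] := IH y Py nPl.
  by exists (y :: p1), z, p2.
- by exists [::], y, p.
Qed.

Lemma plen_cons (R : realFieldType) (V : finType) (wt : V -> V -> R) x y p :
  plen wt x (y :: p) = wt x y + plen wt y p.
Proof. by rewrite /plen /= big_cons. Qed.

Lemma plen_cat (R : realFieldType) (V : finType) (wt : V -> V -> R) x p1 q :
  plen wt x (p1 ++ q) = plen wt x p1 + plen wt (last x p1) q.
Proof.
elim: p1 x => [|a p1 IH] x /=.
- by rewrite /plen /= big_nil add0r.
- by rewrite !plen_cons IH addrA.
Qed.

Lemma plen_ge0 (R : realFieldType) (V : finType) (adj : rel V) (wt : V -> V -> R) x p :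
  (forall x y, adj x y -> 0 <= wt x y) -> path adj x p -> 0 <= plen wt x p.
Proof.
move=> Hw; elim: p x => [|a p IH] x /=.
- by rewrite /plen /= big_nil.
- move=> /andP[Ha Hp]; rewrite plen_cons; apply: addr_ge0; [exact: Hw | exact: IH].
Qed.

Lemma iter_fixed (C : Type) (par : C -> C) d n : par d = d -> iter n par d = d.
Proof. by move=> H; elim: n => //= n ->. Qed.

Lemma acyc (C : finType) (root : C) (par : C -> C) d n :
  rooted_tree root par -> iter n.+1 par d = d -> par d = d.
Proof.
case=> Hr Hall Hd.
have [k Hk] := Hall d.
have per : forall q, iter (q * n.+1) par d = d.
  elim=> [|q IHq] //.
  by rewrite mulSn iterD IHq Hd.
have Hdr : d = root.
  have := per k.
  have -> : (k * n.+1 = (k * n.+1 - k) + k)%N.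
    by rewrite subnK // leq_pmulr.
  by rewrite iterD Hk iter_fixed.
by rewrite Hdr.
Qed.

Lemma is_path_split (V : finType) (adj : rel V) x p1 z p2 :
  is_path adj x (p1 ++ z :: p2) ->
  is_path adj x (rcons p1 z) /\ is_path adj z p2 /\ adj (last x p1) z.
Proof.
rewrite /is_path => /andP[Hp Hu].
move: Hp; rewrite cat_path /= => /andP[Hp1 /andP[Hz Hp2]].
move: (Hu); rewrite -cat_rcons -cat_cons cat_uniq => /and3P[U1 _ U2].
split; last split => //.
- by apply/andP; split; [rewrite rcons_path Hp1 Hz | exact: U1].
- apply/andP; split=> //.
  move: Hu; rewrite -cat_cons cat_uniq => /and3P[_ _ H]. exact H.
Qed.

Lemma plen_rcons (R : realFieldType) (V : finType) (wt : V -> V -> R) x p z :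
  plen wt x (rcons p z) = plen wt x p + wt (last x p) z.
Proof. by rewrite -cats1 plen_cat plen_cons /plen /= big_nil addr0. Qed.

Arguments iter_fixed {C par d n}.
Arguments acyc {C root par d n}.
Arguments plen_ge0 {R V adj wt x p}.
Arguments split_trans {T P x p}.
Arguments is_path_split {V adj x p1 z p2}.
Arguments plen_cons {R V wt x y p}.
Arguments plen_cat {R V wt x p1 q}.
Arguments plen_rcons {R V wt x p z}.

Theorem claim5p2 (R : realFieldType) (V C : finType) (adj : rel V)
    (wt : V -> V -> R) (w : R) (root : C) (par : C -> C) (loc : V -> C + C)
    (eta eta' : C) (m : nat) (u v : V) (p : seq V) :
  wgraph adj wt -> connected adj -> gridtree adj wt w root par loc ->
  anc_gap par eta eta' m ->
  loc u = inl eta -> loc_in_H par eta' (loc v) ->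
  is_path adj u p -> last u p = v ->
  m%:R * w <= plen wt u p.
Proof.
move=> [Hirr [Hsym [_ Hw0]]] _ [Htree Hlo Hadj Hwid _] Hgap Hu Hv Hp Hlast.
have [Em|Hm] := posnP m.
  rewrite Em mul0r; apply: plen_ge0 Hw0 _; by case/andP: Hp.
case: Hgap => [[_ Em]|[Heta Hne]]; first by rewrite Em in Hm.
pose c := fun j => iter j par eta'.
have nofix : forall j, (j <= m)%N -> par (c j) <> c j.
  move=> j Hj Hf; apply: (Hne j Hj); rewrite -Heta.
  have -> : m.+1 = ((m.+1 - j) + j)%N by rewrite subnK // leqW.
  by rewrite iterD (iter_fixed Hf).
have noper : forall j n, (j <= m)%N -> iter n.+1 par (c j) <> c j.
  by move=> j n Hj H; apply: (nofix j Hj); apply: acyc Htree H.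
have step : forall a b d, adj a b -> loc_above par d (loc a) ->
    ~ loc_above par d (loc b) -> loc b = inl d.
  move=> a b d Hab Ha Hb.
  case: (Hadj a b Hab) => [E|[[c0 [c' [La [Lb [Hne' [Hp1|Hp1]]]]]]|
       [c0 [e [[[La Lb]|[La Lb]] Hce]]]]].
  - by rewrite E in Ha.
  - rewrite La /= in Ha; rewrite Lb /= in Hb *.
    apply: False_ind; apply: Hb => -[k Hk]; apply: Ha; exists k.+1.
    by rewrite iterSr Hp1.
  - rewrite La /= in Ha; rewrite Lb /= in Hb *.
    apply: NNPP => Hn; apply: Hb => -[[|k] Hk].
    + by apply: Hn; rewrite -Hk.
    + by apply: Ha; exists k; rewrite -Hk iterSr Hp1.
  - rewrite La /= in Ha; rewrite Lb /= in Hb *.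
    apply: False_ind; apply: Hb => -[Hed [[|k] Hk]] //.
    case: Hce => Hce; first by apply: Ha; exists k.+1; rewrite Hce.
    by apply: Ha; exists k; rewrite Hce -Hk iterSr.
  - rewrite La /= in Ha; rewrite Lb /= in Hb *.
    have [k Hk] : desc par c0 d by apply: NNPP.
    case: (eqVneq e d) => Hed.
    + subst e; case: Hce => Hce; first by rewrite Hce.
      have Hf : par d = d by apply: (acyc (n:=k) Htree); rewrite iterSr -Hce.
      by rewrite Hce Hf.
    + apply: False_ind; apply: Ha; split; first by apply/eqP.
      case: Hce => Hce; first by exists k; rewrite -Hce.
      by exists k.+1; rewrite iterSr -Hce.
have T2 : forall j, (0 < j <= m)%N -> loc_above par (c j) (inl eta).
  move=> j /andP[Hj0 Hj] [k Hk]; rewrite /= in Hk.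
  apply: (noper j (k + m - j)%N Hj).
  rewrite /c -iterD.
  have -> : ((k + m - j).+1 + j = k + m.+1)%N by lia.
  by rewrite iterD Heta.
have T3 : forall j l, (0 < j <= m)%N -> loc_in_H par eta' l -> loc_below par (c j) l.
  move=> j l /andP[Hj0 Hj]; case: l => c0 /= [k Hk].
  - split.
    + move=> E; apply: (noper j (j - 1 + k)%N Hj).
      rewrite -E (_ : (j - 1 + k).+1 = j + k)%N; last by lia.
      by rewrite iterD Hk E.
    + by exists (j + k)%N; rewrite iterD Hk.
  - split.
    + move=> E; apply: (noper j (j - 1 + k)%N Hj).
      rewrite -E (_ : (j - 1 + k).+1 = j + k)%N; last by lia.
      by rewrite iterD Hk E.
    + by exists (j + k)%N; rewrite iterD Hk.
have belowNabove : forall d l, loc_below par d l -> ~ loc_above par d l.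
  by move=> d [] c0 /= H N; apply: N => //; case: H.
have T4a : forall k, (k.+2 <= m)%N -> loc_above par (c k.+1) (inl (c k.+2)).
  move=> k Hk [i Hi].
  apply: (noper k.+1 i (ltnW Hk)).
  rewrite iterSr; exact: Hi.
have T4b : forall k, (k.+2 <= m)%N -> loc_below par (c k.+2) (inl (c k.+1)).
  move=> k Hk; split.
  - move=> E; apply: (nofix k.+1 (ltnW Hk)).
    by rewrite {2}E.
  - by exists 1%N.
have Claim : forall k, (k < m)%N -> forall x q, is_path adj x q ->
    loc_in_H par eta' (loc (last x q)) -> loc x = inl (c k.+1) ->
    (exists y, adj x y /\ loc_above par (c k.+1) (loc y)) ->
    k.+1%:R * w <= plen wt x q.
  elim=> [|k IH] Hk x q Hq Hl Hx Hy.
    rewrite mul1r; apply: (Hwid (c 1%N) x (last x q) q) => //.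
    by apply: T3.
  have Pa : loc_above par (c k.+1) (loc x) by rewrite Hx; apply: T4a.
  have nPl : ~ loc_above par (c k.+1) (loc (last x q)).
    apply: belowNabove; apply: T3 => //; lia.
  have [p1 [z [p2 [Eq [Ha Hz]]]]] :=
    split_trans (P := fun y => loc_above par (c k.+1) (loc y)) Pa nPl.
  subst q.
  have [H1 [H2 Hadjz]] := is_path_split Hq.
  have Lz := step _ _ _ Hadjz Ha Hz.
  rewrite plen_cat plen_cons addrA -plen_rcons.
  have -> : (k.+2)%:R * w = w + (k.+1)%:R * w.
    by rewrite -[k.+2]/(1 + k.+1)%N natrD mulrDl mul1r.
  apply: lerD.
  - apply: (Hwid (c k.+2) x z (rcons p1 z)) => //; last by rewrite last_rcons.
    by rewrite Lz; apply: T4b.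
  - apply: IH => //; first exact: ltnW.
    + by rewrite last_cat /= in Hl.
    + by exists (last x p1); rewrite Hsym.
have Pa : loc_above par (c m) (loc u) by rewrite Hu; apply: T2; rewrite Hm leqnn.
have nPl : ~ loc_above par (c m) (loc (last u p)).
  by apply: belowNabove; apply: T3; rewrite ?Hm ?leqnn // Hlast.
have [p1 [z [p2 [Eq [Ha Hz]]]]] :=
  split_trans (P := fun y => loc_above par (c m) (loc y)) Pa nPl.
subst p.
have [H1 [H2 Hadjz]] := is_path_split Hp.
have Lz := step _ _ _ Hadjz Ha Hz.
rewrite plen_cat plen_cons addrA -plen_rcons.
rewrite -[_ * w]add0r; apply: lerD.
  by apply: plen_ge0 Hw0 _; case/andP: H1.
have Hm' : m = m.-1.+1 by rewrite prednK.
have := Claim m.-1 ltac:(lia) z p2 H2.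
rewrite -Hm'; apply => //.
- by rewrite -Hlast last_cat in Hv.
- by exists (last u p1); rewrite Hsym.
Qed.
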